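(* Let $\mathbb{F}$ be a finite field and $\alpha\in\mathbb{F}$ with $\mathrm{ord}(\alpha)=n$. Define $H_{\min}\in\mathbb{F}[z]^{(n-1)\times n}$ as the matrix whose entry in row $j$ ($j=1,\ldots,n-1$) and column $\nu$ ($\nu=1,\ldots,n$) is $(\alpha^{n-\nu+1})^{j-1}z-(\alpha^{n-\nu+1})^j$. Then $H_{\min}$ is minimal and right invertible, and $G H_{\min}^{\mathsf T}=0$ where $G=\sum_{\nu=0}^{n-1}z^\nu\begin{pmatrix}1&\alpha^\nu&\alpha^{2\nu}&\ldots&\alpha^{(n-1)\nu}\end{pmatrix}\in\mathbb{F}[z]^{1\times n}$. Consequently $H_{\min}$ is a parity check matrix of the convolutional code $\mathrm{im}\,G$, i.e. $\mathrm{im}\,G=\{v\in\mathbb{F}[z]^n\mid vH_{\min}^{\mathsf T}=0\}$.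
   Context: $\mathrm{ord}(\alpha)$ is the multiplicative order of $\alpha$. A polynomial matrix $M\in\mathbb{F}[z]^{k\times n}$ is right invertible if $M\tilde M=I_k$ for some $\tilde M\in\mathbb{F}[z]^{n\times k}$. A full-row-rank matrix $M\in\mathbb{F}[z]^{k\times n}$ is minimal (a minimal basis in Forney's sense) if the sum of its row degrees is minimal among all polynomial matrices whose rows form a basis of the $\mathbb{F}[z]$-module $\mathrm{im}\,M$; equivalently, the matrix of coefficients of the highest row-degree terms has full row rank. A parity check matrix of $\mathcal{C}=\mathrm{im}\,G$ is a right invertible $H$ with $\mathcal{C}=\{v\mid vH^{\mathsf T}=0\}$. *)

(* Defs.v *)
From mathcomp Require Import all_boot all_order all_algebra all_field.
Set Implicit Arguments. Unset Strict Implicit. Unset Printing Implicit Defensive.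
Import GRing.Theory.
Local Open Scope ring_scope.

Section PolyMatrices.
Variable F : fieldType.

Definition in_im k n (M : 'M[{poly F}]_(k, n)) (v : 'rV[{poly F}]_n) : Prop :=
  exists u : 'rV[{poly F}]_k, v = u *m M.

Definition rows_indep k n (M : 'M[{poly F}]_(k, n)) : Prop :=
  forall u : 'rV[{poly F}]_k, u *m M = 0 -> u = 0.

Definition row_deg k n (M : 'M[{poly F}]_(k, n)) (i : 'I_k) : nat :=
  \max_(j < n) (size (M i j)).-1.

Definition sum_row_deg k n (M : 'M[{poly F}]_(k, n)) : nat :=
  \sum_(i < k) row_deg M i.

Definition rows_basis_of k n (M : 'M[{poly F}]_(k, n)) k' (N : 'M[{poly F}]_(k', n)) : Prop :=
  rows_indep N /\ (forall v, in_im M v <-> in_im N v).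

Definition minimal_basis k n (M : 'M[{poly F}]_(k, n)) : Prop :=
  rows_indep M /\
  forall k' (N : 'M[{poly F}]_(k', n)), rows_basis_of M N -> (sum_row_deg M <= sum_row_deg N)%N.

Definition right_invertible k n (M : 'M[{poly F}]_(k, n)) : Prop :=
  exists Mt : 'M[{poly F}]_(n, k), M *m Mt = 1%:M.

Definition parity_check k l n (G : 'M[{poly F}]_(k, n)) (H : 'M[{poly F}]_(l, n)) : Prop :=
  right_invertible H /\ (forall v : 'rV[{poly F}]_n, in_im G v <-> v *m H^T = 0).

End PolyMatrices.

(* H_min: row j = i+1, column nu = m+1; entry (a^(n-nu+1))^(j-1) z - (a^(n-nu+1))^j *)
Definition Hmin (F : fieldType) (n : nat) (a : F) : 'M[{poly F}]_(n.-1, n) :=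
  \matrix_(i < n.-1, m < n)
    (((a ^+ (n - m)) ^+ i)%:P * 'X - ((a ^+ (n - m)) ^+ i.+1)%:P).

Definition Gvand (F : fieldType) (n : nat) (a : F) : 'rV[{poly F}]_n :=
  \row_(m < n) \sum_(v < n) ('X ^+ v * (a ^+ (m * v))%:P).

(* Main.v *)
Require Import Defs.
From mathcomp Require Import all_boot all_order all_algebra all_field.
From mathcomp Require Import zify ring.
Set Implicit Arguments. Unset Strict Implicit. Unset Printing Implicit Defensive.
Import GRing.Theory.
Local Open Scope ring_scope.

Section Aux.
Variable F : fieldType.
Variable n' : nat.
Local Notation n := n'.+1.
Variable a : F.
Hypothesis Hp : n.-primitive_root a.

Lemma an1 : a ^+ n = 1. Proof. exact: prim_expr_order Hp. Qed.
Lemma a_neq0 : a != 0.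
Proof.
have := an1; case: (eqVneq a 0) => // ->.
rewrite expr0n /= => /eqP; by rewrite eq_sym oner_eq0.
Qed.

Definition Kmx : 'M[{poly F}]_(n', n) :=
  \matrix_(i, j) ((if (j == i :> nat) then 'X else 0) - (if (j == i.+1 :> nat) then 1 else 0)).

Lemma sum_delta (f : 'I_n -> {poly F}) (k : nat) (c : {poly F}) : (k < n)%N ->
  \sum_(j < n) (if (j : nat) == k then c else 0) * f j = c * f (inord k).
Proof.
move=> kn; rewrite (bigD1 (inord k)) //= inordK // eqxx big1 ?addr0 // => j Hj.
case: eqP => [Ej|]; last by rewrite mul0r.
by move: Hj; rewrite (_ : j = inord k) ?eqxx //; apply/val_inj; rewrite /= inordK.
Qed.

Lemma mulK p (B : 'M[{poly F}]_(n, p)) (i : 'I_n') l :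
  (Kmx *m B) i l = 'X * B (inord i) l - B (inord i.+1) l.
Proof.
have := ltn_ord i => iH.
rewrite !mxE.
under eq_bigr do rewrite mxE mulrBl.
by rewrite sumrB !sum_delta ?mul1r //; lia.
Qed.

Definition Vc : 'M[F]_n := Vandermonde n (\row_(m < n) a ^+ (n - m)).
Definition Vp := map_mx polyC Vc.
Definition Vpi := map_mx polyC (invmx Vc).

Lemma Vc_unit : Vc \in unitmx.
Proof.
rewrite unitmxE unitfE det_Vandermonde; apply/prodf_neq0 => i _; apply/prodf_neq0 => j ij.
rewrite !mxE subr_eq0 (eq_prim_root_expr Hp).
have := ltn_ord i; have := ltn_ord j; move: ij; rewrite /=.
move=> ij jn iin; apply/negP => /eqP E.
case: (posnP i) => i0.
  rewrite i0 subn0 modnn modn_small in E; lia.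
rewrite !modn_small in E; lia.
Qed.

Lemma VpVpi : Vp *m Vpi = 1%:M.
Proof. by rewrite /Vp /Vpi -map_mxM mulmxV ?Vc_unit // map_mx1. Qed.
Lemma VpiVp : Vpi *m Vp = 1%:M.
Proof. by rewrite /Vp /Vpi -map_mxM mulVmx ?Vc_unit // map_mx1. Qed.

Lemma H_eq : Hmin n a = Kmx *m Vp.
Proof.
apply/matrixP => i m; rewrite mulK !mxE.
have iH := ltn_ord i.
have h1 : (i < n)%N by lia.
have h2 : (i.+1 < n)%N by lia.
rewrite !inordK //.
by rewrite mulrC exprS mulrC.
Qed.

Definition Qmx : 'M[{poly F}]_(n, n') :=
  \matrix_(j, l) (if (l < j)%N then - 'X^(j - l.+1) else 0).

Lemma KQ : Kmx *m Qmx = 1%:M.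
Proof.
apply/matrixP => i l; rewrite mulK !mxE.
have iH := ltn_ord i.
have h1 : (i < n)%N by lia.
have h2 : (i.+1 < n)%N by lia.
rewrite !inordK //.
case: (ltngtP l i) => H.
- rewrite (_ : l < i.+1)%N; last lia.
  rewrite (_ : (i.+1 - l.+1 = (i - l.+1).+1)%N); last lia.
  by rewrite exprS mulrN opprK addrC subrr (_ : (i == l) = false) //; apply/eqP => E; subst; lia.
- rewrite (_ : l < i.+1 = false)%N; last lia.
  by rewrite (_ : (i == l) = false) ?mulr0 ?subr0 //; apply/eqP => E; subst; lia.
- rewrite H ltnSn subnn expr0 mulr0 sub0r opprK.
  by rewrite (_ : i == l) //; apply/eqP/val_inj.
Qed.

Definition Mt := Vpi *m Qmx.

Lemma HMt : Hmin n a *m Mt = 1%:M.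
Proof. by rewrite H_eq /Mt mulmxA -(mulmxA Kmx) VpVpi mulmx1 KQ. Qed.

Definition Rr : 'rV[{poly F}]_n := \row_j 'X^j.

Lemma KR : Kmx *m Rr^T = 0.
Proof.
apply/matrixP => i l; rewrite mulK !mxE.
have iH := ltn_ord i.
have h1 : (i < n)%N by lia.
have h2 : (i.+1 < n)%N by lia.
by rewrite !inordK ?exprS ?subrr.
Qed.

Lemma nd_aux (v j : nat) : (v < n)%N -> (j < n)%N -> v <> j -> ~~ (n %| v + (n - j))%N.
Proof.
move=> vn jn vj; apply/negP => /dvdnP [q Hq].
case: q Hq => [|[|q]] Hq; rewrite ?mul0n ?mul1n ?mulSn in Hq; lia.

Qed.

Lemma term_eq (m v j : nat) : (m < n)%N -> (j < n)%N ->
  a ^+ (m * v) * (a ^+ (n - m)) ^+ j = (a ^+ (v + (n - j))) ^+ m.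
Proof.
move=> mn jn.
rewrite exprD exprMn -!exprM mulnC; congr (_ * _).
rewrite -(expr_mod _ an1) -[in RHS](expr_mod _ an1); congr (a ^+ _).
apply/eqP; rewrite -(eqn_modDr (m * j)).
have e1 : ((n - m) * j + m * j = n * j)%N by rewrite -mulnDl subnK // ltnW.
have e2 : ((n - j) * m + m * j = n * m)%N by rewrite [(m * j)%N]mulnC -mulnDl subnK // ltnW.
by rewrite e1 e2 !modnMr.

Qed.

Lemma sum_root (v j : nat) : (v < n)%N -> (j < n)%N ->
  \sum_(m < n) a ^+ (m * v) * (a ^+ (n - m)) ^+ j = if v == j then n%:R else 0.
Proof.
move=> vn jn.
rewrite (eq_bigr (fun m : 'I_n => (a ^+ (v + (n - j))) ^+ m)); last first.
  by move=> m _; rewrite term_eq.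
set w := a ^+ (v + (n - j)).
case: eqP => [E|E].
  rewrite /w E subnKC ?(ltnW jn) // an1.
  by under eq_bigr do rewrite expr1n; rewrite sumr_const card_ord.
have w1 : w != 1.
  rewrite /w -(prim_order_dvd Hp); exact: nd_aux.
have wn : w ^+ n = 1 by rewrite /w exprAC an1 expr1n.
have h := subrX1 w n.
rewrite wn subrr in h.
have := esym h => /eqP; rewrite mulf_eq0 subr_eq0 (negbTE w1) orFb.
by move/eqP.

Qed.

Lemma GV : Gvand n a *m Vp^T = (n%:R)%:P *: Rr.
Proof.
apply/matrixP => i j; rewrite !mxE.
under eq_bigr do rewrite !mxE mulr_suml.
rewrite exchange_big.
rewrite (eq_bigr (fun v : 'I_n => 'X^v * (if (v:nat) == j then n%:R else 0)%:P)); last first.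
  move=> v _; rewrite -sum_root // rmorph_sum mulr_sumr; apply: eq_bigr => m _.
  by rewrite rmorphM mulrA.
rewrite (bigD1 j) // eqxx big1 /=; first by rewrite addr0 mulrC.
by move=> v Hv; rewrite (inj_eq val_inj) (negbTE Hv) polyC0 mulr0.
Qed.

Lemma RK : Rr *m Kmx^T = 0.
Proof. by rewrite -[Rr]trmxK -trmx_mul KR trmx0. Qed.

Lemma GHT : Gvand n a *m (Hmin n a)^T = 0.
Proof. by rewrite H_eq trmx_mul mulmxA GV -scalemxAl RK scaler0. Qed.

Lemma VVT : Vp^T *m Vpi^T = 1%:M.
Proof. by rewrite -trmx_mul VpiVp trmx1. Qed.

Lemma nR_neq0 : (n%:R : F) != 0.
Proof.
apply/negP => /eqP n0.
have GV0 := GV; rewrite n0 polyC0 scale0r in GV0.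
have : Gvand n a = 0 by rewrite -[Gvand n a]mulmx1 -VVT mulmxA GV0 mul0mx.
move/matrixP => /(_ 0 0); rewrite !mxE /= => h.
have := congr1 (fun p : {poly F} => p`_0) h; rewrite coef_sum coef0.
under eq_bigr do rewrite mulrC coefCM coefXn.
rewrite big_ord_recl /= big1 => [|v _]; last by rewrite mulr0.
by rewrite mul0n expr0 mulr1 addr0 => /eqP; rewrite oner_eq0.
Qed.

Lemma rows_indepH : rows_indep (Hmin n a).
Proof. by move=> u hu; rewrite -[u]mulmx1 -HMt mulmxA hu mul0mx. Qed.

Lemma ker_sub (v : 'rV[{poly F}]_n) : v *m (Hmin n a)^T = 0 -> in_im (Gvand n a) v.
Proof.
move=> hv.
set y := Vp *m v^T.
have Ky : Kmx *m y = 0.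
  by have := congr1 trmx hv; rewrite trmx_mul trmxK trmx0 H_eq -mulmxA.
have yE : forall j : 'I_n, y j 0 = 'X^j * y 0 0.
  suff h : forall k, (k < n)%N -> y (inord k) 0 = 'X^k * y 0 0.
    by move=> j; rewrite -(h j (ltn_ord j)) inord_val.
  elim=> [|k IH] kn.
    by rewrite expr0 mul1r; congr (y _ 0); apply/val_inj; rewrite /= inordK.
  have kn' : (k < n')%N by lia.
  have := Ky; move/matrixP => /(_ (Ordinal kn') 0); move=> /eqP; rewrite mulK [X in _ == X]mxE subr_eq0 => /eqP <-.
  by rewrite IH ?mulrA -?exprS //; lia.
set c : {poly F} := (n%:R)%:P.
set ci : {poly F} := ((n%:R : F)^-1)%:P.
have cic : ci * c = 1 by rewrite /ci /c -polyCM mulVf ?nR_neq0.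
set d := y 0 0 * ci.
have g : Vp *m (Gvand n a)^T = c *: Rr^T.
  rewrite -[Vp]trmxK -trmx_mul GV; apply/matrixP => i j; rewrite !mxE //.
have yR : y = y 0 0 *: Rr^T.
  apply/matrixP => j l; rewrite (ord1 l) yE mulrC [RHS]mxE; congr (_ * _).
  by rewrite !mxE.
have vT : v^T = d *: (Gvand n a)^T.
  rewrite -[v^T]mul1mx -VpiVp -mulmxA -/y yR.
  rewrite -[y 0 0]mulr1 -cic mulrA -/d -scalerA -g -scalemxAr.
  by rewrite mulmxA VpiVp mul1mx.
exists (d%:M); rewrite mul_scalar_mx.
by rewrite -[v]trmxK vT; apply/matrixP => i j; rewrite !mxE.
Qed.

Lemma rowdegH (i : 'I_n') : (row_deg (Hmin n a) i <= 1)%N.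
Proof.
rewrite /row_deg; apply/bigmax_leqP => j _; rewrite mxE.
rewrite -subn1 leq_subLR addn1.
  apply: leq_trans (size_polyD _ _) _; rewrite size_polyN geq_max; apply/andP; split.
    apply: leq_trans (size_polyMleq _ _) _; rewrite size_polyX.
    by rewrite addnS /= addn1 ltnS size_polyC_leq1.
  by apply: leq_trans (size_polyC_leq1 _) _.
Qed.

Lemma sumH : (sum_row_deg (Hmin n a) <= n')%N.
Proof.
rewrite /sum_row_deg; apply: (@leq_trans (\sum_(i < n') 1)%N).
  by apply: leq_sum => i _; exact: rowdegH.
by rewrite sum_nat_const card_ord muln1.
Qed.

Lemma rowdegN k (N : 'M[{poly F}]_(k, n)) : rows_basis_of (Hmin n a) N ->
  forall i, (1 <= row_deg N i)%N.
Proof.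
case=> indN eqim i; rewrite lt0n; apply/negP => /eqP h0.
have hs : forall j, (size (N i j) <= 1)%N.
  move=> j; move: h0; rewrite /row_deg => /eqP; rewrite -leqn0 => /bigmax_leqP h.
  have := h j isT; lia.
set c : 'rV[F]_n := \row_j (N i j)`_0.
have rc : row i N = map_mx polyC c.
  by apply/rowP => j; rewrite !mxE; exact: size1_polyC (hs j).
have : in_im N (row i N) by exists ('e_i); exact: rowE.
move/(eqim _) => [u hu].
have : row i N *m Vpi *m Rr^T = 0.
  rewrite hu H_eq !mulmxA -(mulmxA (u *m Kmx) Vp Vpi) VpVpi mulmx1.
  by rewrite -mulmxA KR mulmx0.
rewrite rc /Vpi -map_mxM.
have [e eE] : exists e, e = c *m invmx Vc by eexists.
rewrite -eE.
move/matrixP => /(_ 0 0); rewrite !mxE => he.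
have e0 : e = 0.
  apply/rowP => j; have := congr1 (fun p : {poly F} => p`_j) he.
  rewrite coef_sum coef0.
  under eq_bigr do rewrite !mxE coefCM coefXn.
  rewrite (bigD1 j) //= eqxx mulr1 big1 /=; first by rewrite addr0 mxE.
  by move=> l hl; rewrite (inj_eq val_inj) eq_sym (negbTE hl) mulr0.
have c0 : c = 0 by rewrite -[c]mulmx1 -(mulVmx Vc_unit) mulmxA -eE e0 mul0mx.
have : ('e_i : 'rV[{poly F}]_k) *m N = 0.
  by rewrite -rowE rc c0; apply/rowP => j; rewrite !mxE.
move/indN/matrixP => /(_ 0 i); rewrite !mxE !eqxx /= => /eqP.
by rewrite oner_eq0.
Qed.

Lemma kge k (N : 'M[{poly F}]_(k, n)) : rows_basis_of (Hmin n a) N -> (n' <= k)%N.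
Proof.
case=> _ eqim.
have exW : forall i : 'I_n', exists w : 'rV[{poly F}]_k, row i (Hmin n a) == w *m N.
  move=> i; have : in_im (Hmin n a) (row i (Hmin n a)) by exists ('e_i); exact: rowE.
  by move/(eqim _) => [w hw]; exists w; apply/eqP.
pose W := \matrix_(i < n') xchoose (exW i).
have HW : Hmin n a = W *m N.
  apply/row_matrixP => i; rewrite row_mul rowK; exact: (eqP (xchooseP (exW i))).
have : W *m (N *m Mt) = 1%:M by rewrite mulmxA -HW HMt.
move/(congr1 (map_mx (horner_eval (0 : F)))); rewrite map_mxM map_mx1 => h.
have := mxrankM_maxl (map_mx (horner_eval (0 : F)) W) (map_mx (horner_eval (0 : F)) (N *m Mt)).
rewrite h mxrank1 => h2.
exact: leq_trans h2 (rank_leq_col _).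
Qed.

Lemma sumN k (N : 'M[{poly F}]_(k, n)) : rows_basis_of (Hmin n a) N ->
  (n' <= sum_row_deg N)%N.
Proof.
move=> hN; apply: leq_trans (kge hN) _.
rewrite /sum_row_deg; apply: (@leq_trans (\sum_(i < k) 1)%N).
  by rewrite sum_nat_const card_ord muln1.
by apply: leq_sum => i _; exact: rowdegN.
Qed.

End Aux.

Theorem theorem3p3 (F : finFieldType) (n : nat) (alpha : F)
    (Hord : n.-primitive_root alpha) :
  minimal_basis (Hmin n alpha) /\ right_invertible (Hmin n alpha) /\
  Gvand n alpha *m (Hmin n alpha)^T = 0 /\
  parity_check (Gvand n alpha) (Hmin n alpha) /\
  (forall v : 'rV[{poly F}]_n, in_im (Gvand n alpha) v <-> v *m (Hmin n alpha)^T = 0).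
Proof.
case: n Hord => [|n'] Hord; first by have := prim_order_gt0 Hord.
have RI : right_invertible (Hmin n'.+1 alpha) by exists (Mt n' alpha); exact: HMt.
have PC : forall v : 'rV[{poly F}]_n'.+1,
    in_im (Gvand n'.+1 alpha) v <-> v *m (Hmin n'.+1 alpha)^T = 0.
  move=> v; split; last exact: ker_sub.
  by case=> u ->; rewrite -mulmxA (GHT Hord) mulmx0.
split; last by split=> //; split; [exact: GHT | split].
split; first exact: rows_indepH.
move=> k N hN; apply: leq_trans (sumH _ _) (sumN Hord hN).
Qed.
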